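(* Let $\mathbf M=(\mathbb X,\mathbb U,\mathbb Y,x_0,\mathbf t,h)$ and $\widehat{\mathbf M}=(\hat{\mathbb X},\hat{\mathbb U},\mathbb Y,\hat x_0,\hat{\mathbf t},\hat h)$ be gMDPs with $\mathbf M\preceq^\delta_\epsilon\widehat{\mathbf M}$ via a relation $\mathcal R\subseteq\mathbb X\times\hat{\mathbb X}$, and let $\psi$ be an scLTL formula with DFA $\mathcal A_\psi=(Q,q_0,\Sigma,F,\tau)$. If $\hat V:\hat{\mathbb X}\times Q\to[0,1]$ and $V:\mathbb X\times Q\to[0,1]$ satisfy $\hat V(\hat x,q)\ge V(x,q)$ for all $(x,\hat x)\in\mathcal R$ and $q\in Q$, then $$\mathbf T^*_{-\epsilon,-\delta}(\hat V)(\hat x,q)\ge\mathbf T^*(V)(x,q)\qquad\forall(x,\hat x)\in\mathcal R,\ q\in Q.$$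
   Context: A gMDP is $(\mathbb X,\mathbb U,\mathbb Y,x_0,\mathbf t,h)$ with Polish state/input spaces, output space $\mathbb Y$ with metric $\mathbf d_{\mathbb Y}$, initial state, stochastic kernel $\mathbf t(\cdot\mid x,u)$ and measurable output map $h$. $\mathbf M\preceq^\delta_\epsilon\widehat{\mathbf M}$ means there exist an interface $\mathcal U_v:\mathbb U\times\mathbb X\times\hat{\mathbb X}\to\mathcal P(\hat{\mathbb U})$, a measurable relation $\mathcal R\subseteq\mathbb X\times\hat{\mathbb X}$ and a Borel kernel $\mathbb W_{\mathbf t}(\cdot\mid u,x,\hat x)$ on $\mathbb X\times\hat{\mathbb X}$ with $(x_0,\hat x_0)\in\mathcal R$ and, for all $(x,\hat x)\in\mathcal R$: $\mathbf d_{\mathbb Y}(h(x),\hat h(\hat x))\le\epsilon$, and for all $u\in\mathbb U$, $\mathbb W=\mathbb W_{\mathbf t}(\cdot\mid u,x,\hat x)$ has marginals $\mathbf t(\cdot\mid x,u)$ on $\mathbb X$ and $\hat{\mathbf t}(\cdot\mid\hat x,\mathcal U_v(u,x,\hat x))$ on $\hat{\mathbb X}$, and $\mathbb W(\mathcal R)\ge1-\delta$. $\Sigma=2^{\mathsf{AP}}$, $\mathsf L:\mathbb Y\to\Sigma$ measurable labelling, $\mathcal A_\psi$ a DFA (accepting set $F$, transition $\tau:Q\times\Sigma\to Q$) for $\psi$. For the product $\mathbf M\otimes\mathcal A_\psi$ (states $\mathbb X\times Q$, kernel $\bar{\mathbf t}(dx'\times\{q'\}\mid x,q,u)=\mathbf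 1_{\{q'\}}(\tau(q,\mathsf L(h(x'))))\mathbf t(dx'\mid x,u)$): $\mathbf T^\nu(V)(x,q)=\int\max\{\mathbf 1_F(q'),V(x',q')\}\bar{\mathbf t}(dx'\times\{q'\}\mid x,q,\nu(x,q))$ and $\mathbf T^*(V)=\sup_\nu\mathbf T^\nu(V)$ over policies $\nu:\mathbb X\times Q\to\mathcal P(\mathbb U)$. With $\mathcal N_\epsilon(y)=\{y'\in\mathbb Y:\mathbf d_{\mathbb Y}(y',y)\le\epsilon\}$ and $\bar\tau(q,\hat x')=\{\tau(q,\alpha):\alpha\in\mathsf L(\mathcal N_\epsilon(\hat h(\hat x')))\}$, the optimistic operator is $\mathbf T^*_{-\epsilon,-\delta}(\hat V)(\hat x,q)=\sup_\mu\mathbf L\big(\int_{\hat{\mathbb X}}\max_{q'\in\bar\tau(q,\hat x')}\max\{\mathbf 1_F(q'),\hat V(\hat x',q')\}\,\hat{\mathbf t}(d\hat x'\mid\hat x,\mu)+\delta\big)$, the supremum over inputs/input distributions $\mu$ of $\widehat{\mathbf M}$, with $\mathbf L(r)=\min(1,\max(0,r))$. *)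

(* Defs.v *)
From HB Require Import structures.
From mathcomp Require Import all_boot all_order all_algebra.
From mathcomp Require Import all_classical all_reals all_analysis measurable_realfun.
Set Implicit Arguments. Unset Strict Implicit. Unset Printing Implicit Defensive.
Import Order.TTheory GRing.Theory Num.Theory.
Local Open Scope classical_set_scope.
Local Open Scope ring_scope.

Definition is_metric (R : realType) (Y : Type) (dY : Y -> Y -> R) : Prop :=
  [/\ forall y y', 0 <= dY y y',
      forall y y', dY y y' = 0 <-> y = y',
      forall y y', dY y y' = dY y' y
    & forall y y' y'', dY y y'' <= dY y y' + dY y' y''].

(* Approximate probabilistic relation  M <=^delta_eps Mh  witnessed by the
   interface Uv, the measurable relation Rel and the lifted kernel W.
   t : stochastic kernel on X given X * U;  th : on Xh given Xh * Uh.
   The Mh-kernel under an input distribution mu is the mixture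
   B |-> \int[mu]_uh th (xh, uh) B. *)
Definition approx_sim (R : realType)
    (dX dU dXh dUh : measure_display)
    (X : measurableType dX) (U : measurableType dU)
    (Xh : measurableType dXh) (Uh : measurableType dUh) (Y : Type)
    (dY : Y -> Y -> R)
    (x0 : X) (t : R.-pker (X * U) ~> X) (h : X -> Y)
    (xh0 : Xh) (th : R.-pker (Xh * Uh) ~> Xh) (hh : Xh -> Y)
    (eps delta : R)
    (Uv : U -> X -> Xh -> probability Uh R)
    (Rel : set (X * Xh)%type)
    (W : R.-pker (U * X * Xh)%type ~> (X * Xh)%type) : Prop :=
  [/\ measurable Rel,
      Rel (x0, xh0)
    & forall x xh, Rel (x, xh) ->
        dY (h x) (hh xh) <= eps /\
        forall u : U,
          [/\ forall A, measurable A -> W (u, x, xh) (A `*` [set: _]) = t (x, u) A,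
              forall B, measurable B ->
                W (u, x, xh) ([set: _] `*` B) = (\int[Uv u x xh]_uh th (xh, uh) B)%E
            & ((1 - delta)%:E <= W (u, x, xh) Rel)%E]].

Definition indF (Q : finType) (F : {set Q}) (q : Q) (R : realType) : R :=
  (q \in F)%:R.

Definition prod_integrand (R : realType) (dX : measure_display)
    (X : measurableType dX) (Y : Type) (AP Q : finType)
    (h : X -> Y) (L : Y -> {set AP}) (tau : Q -> {set AP} -> Q) (F : {set Q})
    (V : X -> Q -> R) (q : Q) (x' : X) : \bar R :=
  let q' := tau q (L (h x')) in (Num.max (indF F q' R) (V x' q'))%:E.

Definition Tnu (R : realType) (dX dU : measure_display)
    (X : measurableType dX) (U : measurableType dU) (Y : Type) (AP Q : finType)
    (t : R.-pker (X * U) ~> X) (h : X -> Y) (L : Y -> {set AP})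
    (tau : Q -> {set AP} -> Q) (F : {set Q})
    (nu : X -> Q -> probability U R) (V : X -> Q -> R) (x : X) (q : Q) : \bar R :=
  (\int[nu x q]_u \int[t (x, u)]_x' prod_integrand h L tau F V q x')%E.

Definition Tstar (R : realType) (dX dU : measure_display)
    (X : measurableType dX) (U : measurableType dU) (Y : Type) (AP Q : finType)
    (t : R.-pker (X * U) ~> X) (h : X -> Y) (L : Y -> {set AP})
    (tau : Q -> {set AP} -> Q) (F : {set Q})
    (V : X -> Q -> R) (x : X) (q : Q) : \bar R :=
  ereal_sup [set Tnu t h L tau F nu V x q | nu in
                [set: X -> Q -> probability U R]].

Definition Neps (R : realType) (Y : Type) (dY : Y -> Y -> R) (eps : R) (y : Y)
  : set Y := [set y' | dY y' y <= eps].

Definition taubar (R : realType) (Y : Type) (dY : Y -> Y -> R) (eps : R)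
    (AP Q : finType) (Xh : Type) (hh : Xh -> Y) (L : Y -> {set AP})
    (tau : Q -> {set AP} -> Q) (q : Q) (xh' : Xh) : set Q :=
  [set tau q a | a in L @` Neps dY eps (hh xh')].

Definition opt_integrand (R : realType) (dXh : measure_display)
    (Xh : measurableType dXh) (Y : Type) (dY : Y -> Y -> R) (eps : R)
    (AP Q : finType) (hh : Xh -> Y) (L : Y -> {set AP})
    (tau : Q -> {set AP} -> Q) (F : {set Q})
    (Vh : Xh -> Q -> R) (q : Q) (xh' : Xh) : \bar R :=
  ereal_sup [set (Num.max (indF F q' R) (Vh xh' q'))%:E | q' in
                taubar dY eps hh L tau q xh'].

Definition clamp01 (R : realType) (r : \bar R) : \bar R :=
  Order.min 1%E (Order.max 0%E r).

Definition Tstar_opt (R : realType) (dXh dUh : measure_display)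
    (Xh : measurableType dXh) (Uh : measurableType dUh) (Y : Type)
    (dY : Y -> Y -> R) (eps delta : R) (AP Q : finType)
    (th : R.-pker (Xh * Uh) ~> Xh) (hh : Xh -> Y) (L : Y -> {set AP})
    (tau : Q -> {set AP} -> Q) (F : {set Q})
    (Vh : Xh -> Q -> R) (xh : Xh) (q : Q) : \bar R :=
  ereal_sup [set clamp01
                 ((\int[mu]_uh \int[th (xh, uh)]_xh'
                     opt_integrand dY eps hh L tau F Vh q xh') + delta%:E)%E
             | mu in [set: probability Uh R]].

(* Main.v *)
Require Import Defs.
From HB Require Import structures.
From mathcomp Require Import all_boot all_order all_algebra.
From mathcomp Require Import all_classical all_reals all_analysis measurable_realfun.
From mathcomp Require Import lra.
Set Implicit Arguments. Unset Strict Implicit. Unset Printing Implicit Defensive.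
Import Order.TTheory GRing.Theory Num.Theory.
Local Open Scope classical_set_scope.
Local Open Scope ring_scope.
Section kfix.
Context (R : realType) (dXh dUh dZ : measure_display)
  (Z : measurableType dZ) (Xh : measurableType dXh) (Uh : measurableType dUh).
Variables (th : R.-pker (Xh * Uh) ~> Xh) (xh : Xh).
Definition kfix : Z * Uh -> {measure set Xh -> \bar R} := fun p => th (xh, p.2).
Let mkfix U : measurable U -> measurable_fun [set: Z * Uh] (kfix ^~ U).
Proof.
move=> mU; rewrite /kfix.
apply: (measurableT_comp (f := th ^~ U) (g := fun p : Z * Uh => (xh, p.2))).
  exact: measurable_kernel.
apply: measurable_fun_pair => //; exact: measurable_snd.
Qed.
HB.instance Definition _ := isKernel.Build _ _ _ _ R kfix mkfix.
Let kfix1 p : kfix p [set: Xh] = 1%E.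
Proof. by rewrite /kfix prob_kernel. Qed.
HB.instance Definition _ := Kernel_isProbability.Build _ _ _ _ R kfix kfix1.
End kfix.

Section kcst.
Context (R : realType) (dZ dUh : measure_display)
  (Z : measurableType dZ) (Uh : measurableType dUh).
Variable P : probability Uh R.
Definition Pc : Z -> pprobability Uh R := fun _ => P.
Lemma mPc : measurable_fun [set: Z] Pc.
Proof. exact: measurable_cst. Qed.
Definition kcst := kprobability mPc.
End kcst.

Lemma comp_int (R : realType) (dXh dUh : measure_display)
  (Xh : measurableType dXh) (Uh : measurableType dUh)
  (th : R.-pker (Xh * Uh) ~> Xh) (xh : Xh) (P : probability Uh R)
  (m : {measure set Xh -> \bar R}) :
  (forall B, measurable B -> m B = (\int[P]_uh th (xh, uh) B)%E) ->
  forall f, (forall z, 0 <= f z)%E -> measurable_fun [set: Xh] f ->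
  (\int[m]_z f z = \int[P]_uh \int[th (xh, uh)]_z f z)%E.
Proof.
move=> hm f f0 mf.
have := @integral_kcomp _ _ _ Xh Uh Xh R (@kcst R _ _ Xh Uh P) (@kfix R _ _ _ Xh Xh Uh th xh) xh f f0 mf.
move=> <-.
apply: eq_measure_integral => B mB _.
by rewrite hm.
Qed.
Lemma meas_dep (R : realType) d (X : measurableType d) (T : finType) (k : X -> T)
  (hk : forall a, measurable (k @^-1` [set a]))
  (G : T -> X -> \bar R) (hG : forall a, measurable_fun [set: X] (G a)) :
  measurable_fun [set: X] (fun x => G (k x) x).
Proof.
move=> _ B mB; rewrite setTI.
have -> : (fun x => G (k x) x) @^-1` B =
   \big[setU/set0]_(a <- enum T) (k @^-1` [set a] `&` (G a @^-1` B)).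
  apply/seteqP; split => x.
    move=> Bx; rewrite -bigcup_seq; exists (k x) => //=.
    by rewrite mem_enum.
  rewrite -bigcup_seq => -[a _ /= [<-]] //.
apply: bigsetU_measurable => a _.
apply: measurableI => //.
by have := hG a measurableT B mB; rewrite setTI.
Qed.

Lemma int_fst (R : realType) d1 d2 (X1 : measurableType d1) (X2 : measurableType d2)
  (w : {measure set (X1 * X2) -> \bar R}) (m : {measure set X1 -> \bar R})
  (hw : forall A, measurable A -> w (A `*` [set: X2]) = m A)
  (f : X1 -> \bar R) : (forall z, 0 <= f z)%E -> measurable_fun [set: X1] f ->
  (\int[m]_z f z = \int[w]_p f p.1)%E.
Proof.
move=> f0 mf.
rewrite (eq_measure_integral (pushforward w fst)); last first.
  move=> A mA _; rewrite /pushforward -hw//; congr (w _).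
  by apply/seteqP; split => -[a b] //= [].
rewrite ge0_integral_pushforward //; try exact: measurable_fst.
Qed.

Lemma int_snd (R : realType) d1 d2 (X1 : measurableType d1) (X2 : measurableType d2)
  (w : {measure set (X1 * X2) -> \bar R}) (m : {measure set X2 -> \bar R})
  (hw : forall A, measurable A -> w ([set: X1] `*` A) = m A)
  (f : X2 -> \bar R) : (forall z, 0 <= f z)%E -> measurable_fun [set: X2] f ->
  (\int[m]_z f z = \int[w]_p f p.2)%E.
Proof.
move=> f0 mf.
rewrite (eq_measure_integral (pushforward w snd)); last first.
  move=> A mA _; rewrite /pushforward -hw//; congr (w _).
  by apply/seteqP; split => -[a b] //= [].
rewrite ge0_integral_pushforward //; try exact: measurable_snd.
Qed.

Lemma int_snd_comp (R : realType) (dX dXh dUh : measure_display)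
  (X : measurableType dX) (Xh : measurableType dXh) (Uh : measurableType dUh)
  (th : R.-pker (Xh * Uh) ~> Xh) (xh : Xh) (P : probability Uh R)
  (w : {measure set (X * Xh) -> \bar R}) :
  (forall B, measurable B -> w ([set: X] `*` B) = (\int[P]_uh th (xh, uh) B)%E) ->
  forall f, (forall z, 0 <= f z)%E -> measurable_fun [set: Xh] f ->
  (\int[w]_p f p.2 = \int[P]_uh \int[th (xh, uh)]_z f z)%E.
Proof.
move=> hw f f0 mf.
pose m := mkcomp (@kcst R _ _ Xh Uh P) (@kfix R _ _ _ Xh Xh Uh th xh) xh.
rewrite -(@int_snd _ _ _ _ _ w m) //.
by apply: comp_int.
Qed.

Theorem lemma4 (R : realType)
    (dX dU dXh dUh dY : measure_display)
    (X : measurableType dX) (U : measurableType dU)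
    (Xh : measurableType dXh) (Uh : measurableType dUh)
    (Y : measurableType dY) (dist : Y -> Y -> R)
    (x0 : X) (t : R.-pker (X * U) ~> X) (h : X -> Y)
    (xh0 : Xh) (th : R.-pker (Xh * Uh) ~> Xh) (hh : Xh -> Y)
    (eps delta : R)
    (Uv : U -> X -> Xh -> probability Uh R)
    (Rel : set (X * Xh)%type)
    (W : R.-pker (U * X * Xh)%type ~> (X * Xh)%type)
    (AP Q : finType) (L : Y -> {set AP})
    (q0 : Q) (tau : Q -> {set AP} -> Q) (F : {set Q})
    (V : X -> Q -> R) (Vh : Xh -> Q -> R) :
  is_metric dist ->
  measurable_fun [set: _] h -> measurable_fun [set: _] hh ->
  (forall a : {set AP}, measurable (L @^-1` [set a])) ->
  approx_sim dist x0 t h xh0 th hh eps delta Uv Rel W ->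
  (forall x q, 0 <= V x q <= 1) ->
  (forall xh q, 0 <= Vh xh q <= 1) ->
  (forall q, measurable_fun [set: _] (V ^~ q)) ->
  (forall q, measurable_fun [set: _] (opt_integrand dist eps hh L tau F Vh q)) ->
  (forall x xh q, Rel (x, xh) -> V x q <= Vh xh q) ->
  forall x xh q, Rel (x, xh) ->
    (Tstar t h L tau F V x q <= Tstar_opt dist eps delta th hh L tau F Vh xh q)%E.
Proof.
move=> dm mh mhh hL [mRel R0 hR] V01 Vh01 mV mopt VVh x xh q Rxxh.
have eps0 : 0 <= eps.
  have [+ _] := hR _ _ R0; apply: le_trans; by case: dm.
set g := prod_integrand h L tau F V q.
set opt := opt_integrand dist eps hh L tau F Vh q.
have indF01 q' : 0 <= indF F q' R <= 1.
  rewrite /indF; case: (q' \in F) => /=; rewrite ?ler01 ?lexx //.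
have g0 x' : (0 <= g x')%E.
  rewrite /g /prod_integrand lee_fin le_max; apply/orP; left.
  by case/andP: (indF01 (tau q (L (h x')))).
have g1 x' : (g x' <= 1)%E.
  rewrite /g /prod_integrand lee_fin ge_max; apply/andP; split.
    by case/andP: (indF01 (tau q (L (h x')))).
  by case/andP: (V01 x' (tau q (L (h x')))).
have mg : measurable_fun [set: X] g.
  rewrite /g /prod_integrand /=.
  apply: (@meas_dep R _ X _ (fun x' => L (h x')) _
     (fun a x' => (Num.max (indF F (tau q a) R) (V x' (tau q a)))%:E)).
    move=> a; have := mh measurableT _ (hL a); rewrite setTI.
    by [].
  move=> a; apply/measurable_EFinP; apply: measurable_maxr => //.
have optge xh' q' : taubar dist eps hh L tau q xh' q' ->
    ((Num.max (indF F q' R) (Vh xh' q'))%:E <= opt xh')%E.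
  move=> hq'; apply: ereal_sup_ubound; by exists q'.
have opt0 xh' : (0 <= opt xh')%E.
  apply: le_trans (optge xh' (tau q (L (hh xh'))) _).
    rewrite lee_fin le_max; apply/orP; left.
    by case/andP: (indF01 (tau q (L (hh xh')))).
  exists (L (hh xh')) => //; exists (hh xh') => //.
  rewrite /Neps /=; have [_ + _ _] := dm; move=> /(_ (hh xh') (hh xh')) [_ ->] //.
have key x' xh' : Rel (x', xh') -> (g x' <= opt xh')%E.
  move=> Rx; apply: le_trans (optge xh' (tau q (L (h x'))) _).
    rewrite lee_fin /g /prod_integrand /=.
    rewrite ge_max; apply/andP; split; first by rewrite le_max lexx.
    by rewrite le_max (VVh _ _ _ Rx) orbT.
  exists (L (h x')) => //; exists (h x') => //.
  by rewrite /Neps /=; have [+ _] := hR _ _ Rx.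
set S := Tstar_opt dist eps delta th hh L tau F Vh xh q.
have fu u : (\int[t (x, u)]_x' g x' <= S)%E.
  have [hA hB hRel] := (hR x xh Rxxh).2 u.
  set w := W (u, x, xh).
  set I := (\int[Uv u x xh]_uh \int[th (xh, uh)]_xh' opt xh')%E.
  have e1 : (\int[t (x, u)]_x' g x' = \int[w]_p g p.1)%E.
    by apply: int_fst.
  have e2 : (\int[w]_p opt p.2 = I)%E.
    exact: (@int_snd_comp R _ _ _ X Xh Uh th xh (Uv u x xh) w hB opt opt0 (mopt q)).
  have mgf : measurable_fun [set: X * Xh] (fun p => g p.1).
    exact: measurableT_comp mg measurable_fst.
  have mos : measurable_fun [set: X * Xh] (fun p => opt p.2).
    exact: measurableT_comp (mopt q) measurable_snd.
  have mCR : measurable (~` Rel) by exact: measurableC.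
  have mind : measurable_fun [set: X * Xh] (fun p => (\1_(~` Rel) p : R)%:E).
    apply/measurable_EFinP; exact: measurable_indic.
  have le1 : (\int[w]_p g p.1 <= I + w (~` Rel))%E.
    rewrite -e2 -[w (~` Rel)]/(w (~` Rel)).
    have -> : w (~` Rel) = (\int[w]_p (\1_(~` Rel) p : R)%:E)%E.
      by rewrite integral_indic // setIT.
    rewrite -ge0_integralD //; try (by move=> p _; rewrite lee_fin); try (by move=> p _; exact: opt0).
    apply: ge0_le_integral => //.
    - by apply: emeasurable_funD.
    - move=> [x' xh'] _ /=.
      have [Rx|nRx] := pselect (Rel (x', xh')).
        apply: le_trans (key _ _ Rx) _.
        by rewrite leeDl // lee_fin.
      apply: le_trans (g1 x') _.
      rewrite indicE mem_set // addrC.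
      by rewrite leeDl.
  have le2 : (w (~` Rel) <= delta%:E)%E.
    have hU := @measureU _ _ _ w Rel (~` Rel) mRel mCR (setICr Rel).
    have w1 : w [set: X * Xh] = 1%E by exact: prob_kernel.
    have {}hU : (w Rel + w (~` Rel) = 1)%E.
      by rewrite -w1 -(setUv Rel); symmetry; exact: hU.
    move: hRel hU; rewrite -/w.
    have : (0 <= w Rel)%E by [].
    have : (0 <= w (~` Rel))%E by [].
    case: (w Rel) => [a| |]; case: (w (~` Rel)) => [b| |] //=.
    move=> b0 a0; rewrite lee_fin -EFinD => ha /eqP; rewrite eqe => /eqP hab.
    rewrite lee_fin; lra.
  have fu1 : (\int[t (x, u)]_x' g x' <= 1)%E.
    apply: le_trans (_ : (\int[t (x, u)]_x' (cst 1%E) x' <= 1)%E).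
      apply: ge0_le_integral => //; exact: measurable_cst.
    by rewrite integral_cst // prob_kernel mul1e.
  apply: le_trans (_ : clamp01 (I + delta%:E)%E <= S)%E; last first.
    by apply: ereal_sup_ubound; exists (Uv u x xh).
  rewrite /clamp01 le_min fu1 /= le_max; apply/orP; right.
  rewrite e1; apply: le_trans le1 _.
  exact: leeD.
have S0 : (0 <= S)%E.
  apply: le_trans (fu point) => /=.
  by apply: integral_ge0 => x' _; exact: g0.
apply: ge_ereal_sup => _ [nu _ <-].
rewrite /Tnu -/g.
apply: le_trans (_ : (\int[nu x q]_u (cst S) u <= S)%E).
  apply: ge0_le_integral => //. all: try (by move=> u _; exact: fu).
  - by move=> u _; apply: integral_ge0 => x' _; exact: g0.
  - apply: (@measurable_fun_integral_kernel _ _ U X R (fun u => t (x, u))) => //.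
    move=> A mA.
    apply: (measurableT_comp (f := t ^~ A) (g := fun u : U => (x, u))).
      exact: measurable_kernel.
    exact: measurable_fun_pair.
rewrite integral_cst //.
have p1 : nu x q [set: U] = 1%E by exact: probability_setT.
by apply: (@le_trans _ _ (S * nu x q [set: U])%E) => //; rewrite p1 mule1.
Qed.
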